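(* Let $\mathcal K\subseteq\mathbb{Z}$ be finite and $\Omega=\bigcup_{k\in\mathcal K}(k\pi-\pi/2,\,k\pi+\pi/2)$. Then $\tan:\Omega\to\mathbb{R}$ is amenable.
   Context: Relative distance on $\mathbb{R}$: $\mathrm{dist}(x,y)=0$ if $x=y=0$, $\mathrm{dist}(x,y)=|\log(y/x)|$ if $xy>0$, and $\mathrm{dist}(x,y)=\infty$ otherwise. For a real analytic function $f$ on an open set $\Omega\subseteq\mathbb{R}$, not identically zero, the condition number is $\kappa(f,x)=0$ if $x=0$, $\kappa(f,x)=\infty$ if $x\neq0$ and $f(x)=0$, and $\kappa(f,x)=|x|\,|f'(x)|/|f(x)|$ otherwise; $\mu(f,x)=1+\kappa(f,x)$. $f:\Omega\to\mathbb{R}$ is amenable if there is $C>0$ such that for every $x\in\Omega$ with $\kappa(f,x)<\infty$, the set $B_x=\{y\in\mathbb{R}:\mathrm{dist}(y,x)<1/(C\mu(f,x))\}$ is contained in $\Omega$ and $\mu(f,y)\leq C\mu(f,x)$ for all $y\in B_x$. *)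

(* Defs.v *)
From Stdlib Require Import Reals Lra ZArith List.
From Coquelicot Require Import Coquelicot.
Open Scope R_scope.

Definition rel_dist (x y : R) : Rbar :=
  if Req_EM_T x 0 then (if Req_EM_T y 0 then Finite 0 else p_infty)
  else if Rlt_dec 0 (x * y) then Finite (Rabs (ln (y / x)))
  else p_infty.

Definition kappa (f : R -> R) (x : R) : Rbar :=
  if Req_EM_T x 0 then Finite 0
  else if Req_EM_T (f x) 0 then p_infty
  else Finite (Rabs x * Rabs (Derive f x) / Rabs (f x)).

Definition mu (f : R -> R) (x : R) : Rbar := Rbar_plus (Finite 1) (kappa f x).

Definition amenable (Omega : R -> Prop) (f : R -> R) : Prop :=
  exists C : R, 0 < C /\
    forall x : R, Omega x -> Rbar_lt (kappa f x) p_infty ->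
      forall m : R, mu f x = Finite m ->
        forall y : R, Rbar_lt (rel_dist y x) (Finite (1 / (C * m))) ->
          Omega y /\ Rbar_le (mu f y) (Finite (C * m)).

Definition tan_domain (K : list Z) (x : R) : Prop :=
  exists k : Z, In k K /\ IZR k * PI - PI / 2 < x /\ x < IZR k * PI + PI / 2.

(* Main.v *)
Require Import Defs.
From Stdlib Require Import Reals Lra ZArith List.
From Coquelicot Require Import Coquelicot.
Open Scope R_scope.

Lemma sin_lower a : 0 <= a <= PI/2 -> a/3 <= sin a.
Proof.
  intros [H0 H1]. destruct (sin_bound a 0 H0) as [H _].
  { generalize PI2_Rlt_PI; lra. }
  unfold sin_approx, sin_term in H. simpl in H.
  assert (a <= 2) by (generalize PI_4; lra).
  assert (a*a <= 4) by nra.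
  nra.
Qed.

Lemma sin_upper a : 0 <= a -> sin a <= a.
Proof.
  intros H. destruct (Req_dec a 0) as [->|Hn]. rewrite sin_0; lra.
  left; apply sin_lt_x; lra.
Qed.

Lemma sin_kPI k v : Rabs (sin (IZR k * PI + v)) = Rabs (sin v) /\ Rabs (cos (IZR k * PI + v)) = Rabs (cos v).
Proof.
  assert (Hs : sin (IZR k * PI) = 0) by (apply sin_eq_0_1; eauto).
  assert (Hc : Rabs (cos (IZR k * PI)) = 1).
  { pose proof (sin2_cos2 (IZR k * PI)) as E. rewrite Hs in E. unfold Rsqr in E.
    assert (E2 : cos (IZR k * PI) * cos (IZR k * PI) = 1) by lra.
    destruct (Rle_dec 0 (cos (IZR k * PI))).
    - rewrite Rabs_right by lra. nra.
    - rewrite Rabs_left by lra. nra. }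
  rewrite sin_plus, cos_plus, Hs. split.
  - rewrite Rmult_0_l, Rplus_0_l, Rabs_mult, Hc; ring.
  - rewrite Rmult_0_l, Rminus_0_r, Rabs_mult, Hc; ring.
Qed.

Lemma abs_sin_cos v : Rabs v < PI/2 -> Rabs (sin v) = sin (Rabs v) /\ Rabs (cos v) = sin (PI/2 - Rabs v).
Proof.
  intros H. rewrite sin_shift.
  assert (Hpi := PI2_Rlt_PI).
  destruct (Rle_dec 0 v).
  - rewrite (Rabs_right v) in * by lra. split.
    + apply Rabs_right. apply Rle_ge, sin_ge_0; lra.
    + apply Rabs_right. apply Rle_ge, cos_ge_0; lra.
  - rewrite (Rabs_left v) in * by lra. split.
    + rewrite sin_neg. rewrite Rabs_left1. reflexivity.
      assert (0 <= sin (-v)) by (apply sin_ge_0; lra). rewrite sin_neg in H0; lra.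
    + rewrite cos_neg. apply Rabs_right. apply Rle_ge, cos_ge_0; lra.
Qed.

Lemma Derive_tan x : cos x <> 0 -> Derive tan x = 1 + tan x ^ 2.
Proof.
  intros Hc. apply is_derive_unique. unfold tan. auto_derive. exact Hc.
  field. exact Hc.
Qed.

Lemma kappa_tan x : x <> 0 -> sin x <> 0 -> cos x <> 0 ->
  kappa tan x = Finite (Rabs x / (Rabs (sin x) * Rabs (cos x))).
Proof.
  intros Hx Hs Hc. unfold kappa.
  destruct (Req_EM_T x 0) as [e|_]; [contradiction|].
  assert (Ht : tan x <> 0).
  { unfold tan. intro E. unfold Rdiv in E. apply Rmult_integral in E.
    destruct E as [E|E]; auto. apply (Rinv_neq_0_compat _ Hc E). }
  destruct (Req_EM_T (tan x) 0) as [e|_]; [contradiction|].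
  rewrite Derive_tan by auto. f_equal.
  unfold tan. rewrite Rabs_div by auto.
  assert (0 < Rabs (sin x)) by (apply Rabs_pos_lt; auto).
  assert (0 < Rabs (cos x)) by (apply Rabs_pos_lt; auto).
  rewrite (Rabs_right (1 + _)).
  2:{ apply Rle_ge. apply Rplus_le_le_0_compat. lra. apply pow2_ge_0. }
  replace (1 + (sin x / cos x)^2) with (/ (Rabs (cos x) * Rabs (cos x))).
  field; lra.
  rewrite <- Rabs_mult. rewrite Rabs_right by (apply Rle_ge, Rle_0_sqr).
  pose proof (sin2_cos2 x). unfold Rsqr in H1. 
  replace (1 + (sin x / cos x)^2) with ((sin x * sin x + cos x * cos x) / (cos x * cos x)) by (field; auto).
  rewrite H1. field. auto.
Qed.

Lemma ratio_bound x y d : 0 < d <= 1/4 -> 0 < y * x -> Rabs (ln (x / y)) < d ->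
  Rabs (y - x) <= 2 * d * Rabs x.
Proof.
  intros Hd Hxy Hl.
  assert (Hx : x <> 0) by (intro; subst; lra).
  assert (Hy : y <> 0) by (intro; subst; lra).
  assert (Hq : 0 < x / y).
  { replace (x / y) with ((y * x) / (y * y)) by (field; auto).
    apply Rdiv_lt_0_compat; auto. assert (0 < y*y) by nra. lra. }
  apply Rabs_def2 in Hl. destruct Hl as [Hl1 Hl2].
  assert (E1 : x / y < exp d) by (rewrite <- (exp_ln (x/y)) by auto; apply exp_increasing; lra).
  assert (E2 : exp (-d) < x / y) by (rewrite <- (exp_ln (x/y)) by auto; apply exp_increasing; lra).
  pose proof (exp_ineq1_le (-d)) as E3.
  rewrite exp_Ropp in E3, E2.
  assert (Hed : 0 < exp d) by apply exp_pos.
  set (q := x / y) in *.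
  set (r := y / x).
  assert (Hrq : r * q = 1) by (unfold r, q; field; auto).
  assert (Hyr : y = r * x) by (unfold r; field; auto).
  assert (Hr : 0 < r) by nra.
  assert (R1 : 1 - d < q) by lra.
  assert (R2 : q * (1 - d) < 1).
  { assert (exp d * (1 - d) <= 1).
    { apply Rmult_le_reg_r with (/ exp d). apply Rinv_0_lt_compat; lra.
      replace (exp d * (1 - d) * / exp d) with (1 - d) by (field; lra). lra. }
    nra. }
  assert (R3 : 1 - d < r).
  { assert (H5 := Rmult_lt_compat_l r _ _ Hr R2).
    replace (r * (q * (1 - d))) with ((r * q) * (1 - d)) in H5 by ring. rewrite Hrq in H5. lra. }
  assert (R4 : r < 1 + 2 * d).
  { assert (H5 := Rmult_lt_compat_l r _ _ Hr R1). rewrite Hrq in H5.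
    assert (1 <= (1 + 2 * d) * (1 - d)) by nra.
    assert (H6 : r * (1 - d) < (1 + 2 * d) * (1 - d)) by lra.
    apply Rmult_lt_reg_r in H6; lra. }
  rewrite Hyr. replace (r * x - x) with ((r - 1) * x) by ring.
  rewrite Rabs_mult. apply Rmult_le_compat_r. apply Rabs_pos.
  apply Rabs_le. lra.
Qed.

Theorem mainTheorem11 (K : list Z) : amenable (tan_domain K) tan.
Proof.
  exists 32. split; [lra|].
  intros x Hx Hk m Hm y Hy.
  assert (Hpi := PI2_Rlt_PI). assert (Hpi0 := PI_RGT_0).
  destruct (Req_EM_T x 0) as [Ex|Hx0].
  - subst x. unfold mu, kappa in Hm.
    destruct (Req_EM_T 0 0) as [_|C]; [|lra]. simpl in Hm. injection Hm as Hm.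
    unfold rel_dist in Hy.
    destruct (Req_EM_T y 0) as [Ey|Hy0].
    + subst y. split; auto. unfold mu, kappa.
      destruct (Req_EM_T 0 0) as [_|C]; [|lra]. simpl. lra.
    + destruct (Rlt_dec 0 (y * 0)); [lra|exfalso; exact Hy].
  - destruct Hx as [k [Hin [H1 H2]]].
    set (u := x - IZR k * PI).
    assert (Hu : Rabs u < PI/2) by (apply Rabs_def1; unfold u; lra).
    assert (Hxu : x = IZR k * PI + u) by (unfold u; ring).
    destruct (sin_kPI k u) as [Es Ec]. rewrite <- Hxu in Es, Ec.
    destruct (abs_sin_cos u Hu) as [Es' Ec'].
    set (a := Rabs u) in *. set (b := PI/2 - a) in *.
    assert (Ha0 : 0 <= a) by apply Rabs_pos.
    unfold mu, kappa in Hm, Hk.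
    destruct (Req_EM_T x 0) as [C|_]; [contradiction|].
    destruct (Req_EM_T (tan x) 0) as [Et|Ht]; [exfalso; exact Hk|].
    assert (Hsx : sin x <> 0).
    { intro E. apply Ht. unfold tan. rewrite E. unfold Rdiv. ring. }
    assert (Hcx : cos x <> 0).
    { intro E. rewrite E, Rabs_R0 in Ec. rewrite <- Ec in Ec'.
      assert (b/3 <= sin b) by (apply sin_lower; unfold b; lra). unfold b in *; lra. }
    pose proof (kappa_tan x Hx0 Hsx Hcx) as Ek. unfold kappa in Ek.
    destruct (Req_EM_T x 0) as [C|_]; [contradiction|].
    destruct (Req_EM_T (tan x) 0) as [C|_]; [contradiction|].
    rewrite Ek in Hm. simpl in Hm. injection Hm as Hm.
    set (S := Rabs (sin x)) in *. set (Co := Rabs (cos x)) in *.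
    assert (HS : 0 < S) by (apply Rabs_pos_lt; auto).
    assert (HC : 0 < Co) by (apply Rabs_pos_lt; auto).
    assert (HSa : S <= a) by (rewrite Es, Es'; apply sin_upper; auto).
    assert (HCb : Co <= b) by (rewrite Ec, Ec'; apply sin_upper; unfold b; lra).
    assert (HS1 : S <= 1) by (unfold S; apply Rabs_le; apply SIN_bound).
    assert (HC1 : Co <= 1) by (unfold Co; apply Rabs_le; apply COS_bound).
    set (Kx := Rabs x / (S * Co)) in *.
    assert (HP : 0 < S * Co) by nra.
    assert (HKx : Kx * (S * Co) = Rabs x) by (unfold Kx; field; lra).
    assert (HKx0 : 0 <= Kx) by (unfold Kx; apply Rdiv_le_0_compat; [apply Rabs_pos|lra]).
    assert (Hm1 : 1 <= m) by lra.
    set (d := 1 / (32 * m)).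
    assert (Hd : 0 < d <= 1/32).
    { unfold d. split. apply Rdiv_lt_0_compat; lra.
      apply Rmult_le_reg_r with (32 * m). lra.
      unfold Rdiv. rewrite Rmult_assoc, Rinv_l by lra. nra. }
    assert (Hdm : d * (32 * m) = 1) by (unfold d; field; lra).
    unfold rel_dist in Hy.
    destruct (Req_EM_T y 0) as [Ey|Hy0].
    { destruct (Req_EM_T x 0); [contradiction|]. exfalso; exact Hy. }
    destruct (Rlt_dec 0 (y * x)) as [Hyx|]; [|exfalso; exact Hy].
    simpl in Hy.
    assert (HD := ratio_bound x y d ltac:(lra) Hyx Hy).
    set (D := Rabs (y - x)) in *.
    assert (HD0 : 0 <= D) by apply Rabs_pos.
    assert (HD2 : 2 * d * Rabs x <= S * Co / 16).
    { rewrite <- HKx. assert (d * 32 * (1 + Kx) = 1) by (rewrite Hm; lra).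
      assert (d * 32 * Kx <= 1) by nra. nra. }
    assert (HDa : D <= a / 16) by nra.
    assert (HDb : D <= b / 16) by nra.
    set (v := y - IZR k * PI).
    assert (Hyv : y = IZR k * PI + v) by (unfold v; ring).
    assert (Hvu : Rabs (v - u) = D) by (unfold D, v, u; f_equal; ring).
    assert (Hv1 : 15 * a / 16 <= Rabs v).
    { pose proof (Rabs_triang_inv u (u - v)). rewrite Rabs_minus_sym in Hvu.
      replace (u - (u - v)) with v in H by ring. fold a in H. lra. }
    assert (Hv2 : Rabs v <= a + b / 16).
    { pose proof (Rabs_triang u (v - u)). replace (u + (v - u)) with v in H by ring.
      fold a in H. lra. }
    assert (Hvpi : Rabs v < PI/2) by (unfold b in *; lra).
    split.
    + exists k. split; auto. apply Rabs_def2 in Hvpi. unfold v in Hvpi. lra.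
    + destruct (sin_kPI k v) as [Fs Fc]. rewrite <- Hyv in Fs, Fc.
      destruct (abs_sin_cos v Hvpi) as [Fs' Fc'].
      assert (HS' : S / 4 <= Rabs (sin y)).
      { rewrite Fs, Fs'. assert (Rabs v / 3 <= sin (Rabs v)) by (apply sin_lower; split; [apply Rabs_pos|lra]). lra. }
      assert (HC' : Co / 4 <= Rabs (cos y)).
      { rewrite Fc, Fc'. assert ((PI/2 - Rabs v) / 3 <= sin (PI/2 - Rabs v)) by (apply sin_lower; split; [lra|generalize (Rabs_pos v); lra]).
        unfold b in *; lra. }
      assert (HSy : sin y <> 0).
      { intro E. rewrite E, Rabs_R0 in HS'. lra. }
      assert (HCy : cos y <> 0).
      { intro E. rewrite E, Rabs_R0 in HC'. lra. }
      unfold mu. rewrite (kappa_tan y Hy0 HSy HCy). simpl.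
      set (S' := Rabs (sin y)) in *. set (C' := Rabs (cos y)) in *.
      assert (Hyabs : Rabs y <= 2 * Rabs x).
      { pose proof (Rabs_triang x (y - x)). replace (x + (y - x)) with y in H by ring.
        fold D in H. pose proof (Rabs_pos x).
        assert (d * Rabs x <= 1/32 * Rabs x) by (apply Rmult_le_compat_r; lra). lra. }
      assert (HP' : S / 4 * (Co / 4) <= S' * C').
      { apply Rmult_le_compat; lra. }
      assert (HP'0 : 0 < S' * C').
      { apply Rmult_lt_0_compat; lra. }
      assert (Rabs y / (S' * C') <= 32 * Kx).
      { apply Rmult_le_reg_r with (S' * C'); auto.
        replace (Rabs y / (S' * C') * (S' * C')) with (Rabs y) by (field; lra).
        assert (Kx * (S * Co) <= Kx * (16 * (S' * C'))).
        { apply Rmult_le_compat_l; lra. }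
        lra. }
      lra.
Qed.
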